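(* Let $\mathbf U$ be a real $3\times3$ positive-definite symmetric matrix, $|\hat{\mathbf e}|=1$, $\hat{\mathbf U}=(-\mathbf I+2\hat{\mathbf e}\otimes\hat{\mathbf e})\mathbf U(-\mathbf I+2\hat{\mathbf e}\otimes\hat{\mathbf e})$, and let $\hat{\mathbf R}\in\mathrm{SO}(3)$, nonzero $\mathbf a,\mathbf n\in\mathbb R^3$ satisfy $\hat{\mathbf R}\hat{\mathbf U}=\mathbf U+\mathbf a\otimes\mathbf n$. Suppose the cofactor conditions hold: (CC1) the middle eigenvalue of $\mathbf U$ equals $1$; (CC2) $\mathbf a\cdot\mathbf U\,\mathrm{cof}(\mathbf U^2-\mathbf I)\mathbf n=0$; (CC3) $\mathrm{tr}\,\mathbf U^2-\det\mathbf U^2-\frac{|\mathbf a|^2|\mathbf n|^2}{4}-2\ge0$. For $f\in[0,1]$ let $\mathbf C_f=(\mathbf U+f\,\mathbf n\otimes\mathbf a)(\mathbf U+f\,\mathbf a\otimes\mathbf n)$, whose middle eigenvalue is $1$ for every $f\in[0,1]$, and denote its other two eigenvalues by $\lambda_1(f)^2\le1\le\lambda_3(f)^2$. Then $\lambda_1(f)^2<1<\lambda_3(f)^2$ for all $f\in[0,1]$ with $f\neq1/2$. In particular, the eigenvalues $\lambda_1,\lambda_3$ of $\mathbf U$ other than the middle one satisfy $\lambda_1<1<\lambda_3$.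
   Context: $\mathbf a\otimes\mathbf n$ is the matrix $\mathbf x\mapsto(\mathbf n\cdot\mathbf x)\mathbf a$; $\mathrm{cof}\,\mathbf A$ is the cofactor matrix of $\mathbf A$, $(\mathrm{cof}\,\mathbf A)_{ij}=(-1)^{i+j}\det$ of the submatrix obtained by deleting row $i$ and column $j$. $\lambda_1(f),\lambda_3(f)$ are taken positive. *)

(* Defs.v *)
From HB Require Import structures.
From mathcomp Require Import all_boot all_order all_algebra.
From mathcomp Require Import reals.
Set Implicit Arguments. Unset Strict Implicit. Unset Printing Implicit Defensive.
Import Order.TTheory GRing.Theory Num.Theory.
Local Open Scope ring_scope.

Definition dot {R : realType} (u v : 'cV[R]_3) : R := (u^T *m v) 0 0.

(* a (x) n : x |-> (n . x) a, i.e. the matrix a n^T *)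
Definition tens {R : realType} (a n : 'cV[R]_3) : 'M[R]_3 := a *m n^T.

Definition cofmx {R : realType} (A : 'M[R]_3) : 'M[R]_3 :=
  \matrix_(i, j) cofactor A i j.

Definition sym_posdef {R : realType} (U : 'M[R]_3) : Prop :=
  U^T = U /\ forall x : 'cV[R]_3, x != 0 -> 0 < dot x (U *m x).

Definition rot3 {R : realType} (Q : 'M[R]_3) : Prop :=
  Q^T *m Q = 1%:M /\ \det Q = 1.

Definition ordered_eigs {R : realType} (A : 'M[R]_3) (l1 l2 l3 : R) : Prop :=
  l1 <= l2 /\ l2 <= l3 /\
  char_poly A = ('X - l1%:P) * ('X - l2%:P) * ('X - l3%:P).

Definition Cf {R : realType} (U : 'M[R]_3) (a n : 'cV[R]_3) (f : R) : 'M[R]_3 :=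
  (U + f *: tens n a) *m (U + f *: tens a n).

(* Main.v *)
Require Import Defs.
From HB Require Import structures.
From mathcomp Require Import all_boot all_order all_algebra.
From mathcomp Require Import reals.
From mathcomp Require Import ring lra.
Import Order.TTheory GRing.Theory Num.Theory.
Local Open Scope ring_scope.

Notation o0 := (@Ordinal 3 0 isT).
Notation o1 := (@Ordinal 3 1 isT).
Notation o2 := (@Ordinal 3 2 isT).

Ltac nmx M := let u := fresh "u" in let E := fresh "E" in
  pose u := fun x y : nat => M (inord x) (inord y);
  assert (E : forall i j, M i j = u i j) by (move=> i j; by rewrite /u !inord_val);
  rewrite ?E; clear E.

Ltac nsym U HU := let u := fresh "u" in let E := fresh "E" in
  pose u := fun x y : nat => if (x <= y)%N then U (inord x) (inord y) else U (inord y) (inord x);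
  assert (E : forall i j, U i j = u i j) by
    (move=> i j; rewrite /u; case: leqP => _; by rewrite !inord_val // -{1}HU mxE);
  rewrite ?E; clear E.

Ltac expd := do 4 rewrite ?big_ord_recr ?big_ord0 ?mxE /=.

Lemma det2 (R : comNzRingType) (A : 'M[R]_2) : \det A =
  A (@Ordinal 2 0 isT) (@Ordinal 2 0 isT) * A (@Ordinal 2 1 isT) (@Ordinal 2 1 isT)
  - A (@Ordinal 2 0 isT) (@Ordinal 2 1 isT) * A (@Ordinal 2 1 isT) (@Ordinal 2 0 isT).
Proof.
rewrite (expand_det_row _ ord0) !big_ord_recl big_ord0 /cofactor !det_mx11 !mxE.
nmx A; rewrite /bump /=. ring.
Qed.

Lemma det3 (R : comNzRingType) (A : 'M[R]_3) : \det A =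
  A o0 o0 * (A o1 o1 * A o2 o2 - A o1 o2 * A o2 o1)
  - A o0 o1 * (A o1 o0 * A o2 o2 - A o1 o2 * A o2 o0)
  + A o0 o2 * (A o1 o0 * A o2 o1 - A o1 o1 * A o2 o0).
Proof.
rewrite (expand_det_row _ ord0) !big_ord_recl big_ord0 /cofactor !det2 !mxE.
nmx A; rewrite /bump /=. ring.
Qed.

Definition c2 {R : comNzRingType} (A : 'M[R]_3) : R :=
  A o0 o0 * A o1 o1 - A o0 o1 * A o1 o0 + A o0 o0 * A o2 o2 - A o0 o2 * A o2 o0
  + A o1 o1 * A o2 o2 - A o1 o2 * A o2 o1.

Lemma char3 (R : realType) (A : 'M[R]_3) (x : R) :
  \det (x%:M - A) = x ^+ 3 - \tr A * x ^+ 2 + c2 A * x - \det A.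
Proof.
rewrite /c2 !det3 /mxtrace; expd. nmx A. ring.
Qed.

Lemma trsq (R : realType) (A : 'M[R]_3) :
  \tr (A *m A) = \tr A ^+ 2 - 2 * c2 A.
Proof. rewrite /c2 /mxtrace; expd. nmx A. rewrite /bump /=. ring. Qed.

Lemma trCf (R : realType) (U : 'M[R]_3) (a n : 'cV[R]_3) (f : R) :
  \tr (Cf U a n f) = \tr (U *m U) + f * ((n^T *m U *m a) 0 0 + (a^T *m U *m n) 0 0)
     + f ^+ 2 * (dot a a * dot n n).
Proof. rewrite /Cf /tens /dot /mxtrace; expd. nmx U; nmx a; nmx n. ring. Qed.

Lemma detF (R : realType) (U : 'M[R]_3) (a n : 'cV[R]_3) (f : R) :
  \det (U + f *: tens a n) = \det U + f * (\det (U + tens a n) - \det U).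
Proof. rewrite /tens !det3; expd. nmx U; nmx a; nmx n. ring. Qed.



Definition Mf {R : realType} (A : 'M[R]_3) (b c n : 'cV[R]_3) (k f : R) : 'M[R]_3 :=
  \matrix_(i,j) (A i j + f * (b i 0 * n j 0 + n i 0 * c j 0) + f^+2 * k * (n i 0 * n j 0)).

Ltac cases3 := apply/matrixP; case => [[|[|[|//]]] ?]; case => [[|[|[|//]]] ?].

Lemma CfE (R : realType) (U : 'M[R]_3) (a n : 'cV[R]_3) (f : R) : U^T = U ->
  Cf U a n f - 1%:M = Mf (U *m U - 1%:M) (U *m a) (U *m a) n (dot a a) f.
Proof.
move=> HU; cases3; rewrite /Mf /Cf /tens /dot; expd; nsym U HU; nmx a; nmx n; rewrite /bump /=; ring.
Qed.

Lemma L1 (R : realType) (A : 'M[R]_3) (b c n : 'cV[R]_3) (k f : R) :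
  let L := (b^T *m cofmx A *m n) 0 0 + (n^T *m cofmx A *m c) 0 0 in
  \det (Mf A b c n k f) - \det A - f * L =
  f ^+ 2 * (\det (Mf A b c n k 1) - \det A - L).
Proof.
move=> L; rewrite /L /Mf /cofmx.
rewrite !det3 !mxE.
do 3 rewrite ?big_ord_recr ?big_ord0 ?mxE /=.
rewrite /cofactor !det2 !mxE.
nmx A; nmx b; nmx c; nmx n; rewrite /bump /=.
ring.
Qed.

Lemma Cf_tr (R : realType) (U : 'M[R]_3) (a n : 'cV[R]_3) (f : R) : U^T = U ->
  Cf U a n f = (U + f *: tens a n)^T *m (U + f *: tens a n).
Proof.
move=> HU; cases3; rewrite /Cf /tens; expd; nsym U HU; nmx a; nmx n; rewrite /bump /=; ring.
Qed.

Lemma QQgen (R : realType) (e : 'cV[R]_3) :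
  (- 1%:M + 2%:R *: tens e e) *m (- 1%:M + 2%:R *: tens e e) =
  1%:M + (4%:R * (dot e e - 1)) *: tens e e.
Proof. cases3; rewrite /tens /dot; expd; nmx e; rewrite /bump /=; ring. Qed.

Lemma Qsym (R : realType) (e : 'cV[R]_3) :
  (- 1%:M + 2%:R *: tens e e)^T = - 1%:M + 2%:R *: tens e e.
Proof. cases3; rewrite /tens; expd; nmx e; rewrite /bump /=; ring. Qed.

Lemma cofT (R : realType) (A : 'M[R]_3) : (cofmx A)^T = cofmx A^T.
Proof. by apply/matrixP => i j; rewrite !mxE cofactor_tr. Qed.

Lemma UU1sym (R : realType) (U : 'M[R]_3) : U^T = U -> (U *m U - 1%:M)^T = U *m U - 1%:M.
Proof. move=> HU; cases3; expd; nsym U HU; rewrite /bump /=; ring. Qed.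

Lemma UU1fac (R : realType) (U : 'M[R]_3) : U *m U - 1%:M = (U - 1%:M) *m (U + 1%:M).
Proof. cases3; expd; nmx U; rewrite /bump /=; ring. Qed.

Lemma detN3 (R : realType) (M : 'M[R]_3) : \det (- M) = - \det M.
Proof. by rewrite -scaleN1r detZ; ring. Qed.

Lemma dot3 (R : realType) (a : 'cV[R]_3) :
  dot a a = a o0 0 ^+ 2 + a o1 0 ^+ 2 + a o2 0 ^+ 2.
Proof. rewrite /dot; expd; nmx a; rewrite /bump /=; ring. Qed.

Lemma dot_pos (R : realType) (a : 'cV[R]_3) : a != 0 -> 0 < dot a a.
Proof.
move=> Ha; rewrite dot3 lt_def; apply/andP; split; last first.
  by rewrite !addr_ge0 // sqr_ge0.
apply/negP => /eqP H0.
have h0 : a o0 0 = 0 by nra.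
have h1 : a o1 0 = 0 by nra.
have h2 : a o2 0 = 0 by nra.
move/negP: Ha; apply; apply/eqP/matrixP => i j; rewrite ord1 mxE.
case: i => [[|[|[|//]]] Hi].
- by rewrite (bool_irrelevance Hi isT).
- by rewrite (bool_irrelevance Hi isT).
- by rewrite (bool_irrelevance Hi isT).
Qed.



Lemma char_eval (R : realType) (A : 'M[R]_3) x : (char_poly A).[x] = \det (x%:M - A).
Proof.
rewrite /char_poly -horner_evalE -det_map_mx; congr (\det _).
apply/matrixP => i j; rewrite !mxE /= ?horner_evalE.
by rewrite hornerD hornerN hornerMn hornerX hornerC.
Qed.

Lemma eig_facts (R : realType) (A : 'M[R]_3) s1 s2 s3 : ordered_eigs A s1 s2 s3 ->
  [/\ \tr A = s1 + s2 + s3, c2 A = s1 * s2 + s1 * s3 + s2 * s3 & \det A = s1 * s2 * s3].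
Proof.
case=> _ [_ HA].
have P x : \det (x%:M - A) = (x - s1) * (x - s2) * (x - s3).
  by rewrite -char_eval HA !hornerE.
have P0 := P 0; have P1 := P 1; have Pm := P (-1).
rewrite !char3 in P0 P1 Pm.
rewrite !expr0n /= !expr1n in P0 P1 Pm.
split; nra.
Qed.



Lemma eig_pos (R : realType) (U : 'M[R]_3) u1 u2 u3 :
  sym_posdef U -> ordered_eigs U u1 u2 u3 -> 0 < u1.
Proof.
move=> [HU Hpd] hs; have [_ [_ HA]] := hs.
have hr : root (char_poly U) u1 by rewrite /root HA !hornerE subrr !mul0r.
move: hr; rewrite -eigenvalue_root_char => /eigenvalueP [v hv v0].
set x := v^T.
have hx : U *m x = u1 *: x.
  by rewrite /x -{1}HU -trmx_mul hv linearZ.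
have x0 : x != 0.
  apply: contra v0 => /eqP h; apply/eqP; by rewrite -(trmxK v) -/x h trmx0.
have := Hpd x x0; rewrite hx /dot -scalemxAr mxE.
have := @dot_pos _ x x0; rewrite /dot => hd hp.
by rewrite (pmulr_lgt0 _ hd) in hp.
Qed.

Lemma final3 (R : realType) (s1 s2 s3 t c d : R) :
  s1 <= s2 -> s2 <= s3 -> t = s1 + s2 + s3 -> c = s1 * s2 + s1 * s3 + s2 * s3 ->
  d = s1 * s2 * s3 -> 1 - t + c - d = 0 -> 0 < t - d - 2 ->
  s2 = 1 /\ s1 < 1 /\ 1 < s3.
Proof.
move=> h12 h23 ht hc hd h1 hg.
have /eqP : (1 - s1) * (1 - s2) * (1 - s3) = 0 by rewrite -h1 ht hc hd; ring.
rewrite !mulf_eq0 !subr_eq0 => /orP [/orP [/eqP e|/eqP e]|/eqP e].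
- exfalso; subst s1 t d.
  have : 0 <= (s2 - 1) * (s3 - 1) by apply: mulr_ge0; lra.
  nra.
- subst s2 t d; split => //.
  have : 0 < (1 - s1) * (s3 - 1) by nra.
  have ha : 0 <= 1 - s1 by lra.
  have hb : 0 <= s3 - 1 by lra.
  move=> hp; split.
  + rewrite -subr_gt0 lt_def ha andbT; apply/eqP => h0; move: hp; rewrite h0 mul0r; lra.
  + rewrite -subr_gt0 lt_def hb andbT; apply/eqP => h0; move: hp; rewrite h0 mulr0; lra.
- exfalso; subst s3 t d.
  have : 0 <= (1 - s1) * (1 - s2) by apply: mulr_ge0; lra.
  nra.
Qed.

Lemma finalU (R : realType) (u1 u2 u3 : R) :
  u1 <= u2 -> u2 <= u3 -> 0 < u1 -> (1 - u1) * (1 - u2) * (1 - u3) = 0 ->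
  0 < (u1 + u2 + u3) ^+ 2 - 2 * (u1 * u2 + u1 * u3 + u2 * u3) - (u1 * u2 * u3) ^+ 2 - 2 ->
  u1 < 1 /\ 1 < u3.
Proof.
move=> h12 h23 hp /eqP.
rewrite !mulf_eq0 !subr_eq0 => /orP [/orP [/eqP e|/eqP e]|/eqP e] hg.
- exfalso; subst u1.
  have : 0 <= (u2 ^+ 2 - 1) * (u3 ^+ 2 - 1) by apply: mulr_ge0; nra.
  have E : (1 + u2 + u3) ^+ 2 - 2 * (1 * u2 + 1 * u3 + u2 * u3) - (1 * u2 * u3) ^+ 2 - 2
     = - ((u2 ^+ 2 - 1) * (u3 ^+ 2 - 1)) by ring.
  rewrite E in hg; lra.
- subst u2.
  have E : (u1 + 1 + u3) ^+ 2 - 2 * (u1 * 1 + u1 * u3 + 1 * u3) - (u1 * 1 * u3) ^+ 2 - 2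
     = (1 - u1 ^+ 2) * (u3 ^+ 2 - 1) by ring.
  rewrite E in hg.
  have ha : 0 <= 1 - u1 ^+ 2 by nra.
  have hb : 0 <= u3 ^+ 2 - 1 by nra.
  have ha' : 0 < 1 - u1 ^+ 2.
    rewrite lt_def ha andbT; apply/eqP => h0; move: hg; rewrite h0 mul0r; lra.
  have hb' : 0 < u3 ^+ 2 - 1.
    rewrite lt_def hb andbT; apply/eqP => h0; move: hg; rewrite h0 mulr0; lra.
  split; nra.
- exfalso; subst u3.
  have : 0 <= (1 - u1 ^+ 2) * (1 - u2 ^+ 2) by apply: mulr_ge0; nra.
  have E : (u1 + u2 + 1) ^+ 2 - 2 * (u1 * u2 + u1 * 1 + u2 * 1) - (u1 * u2 * 1) ^+ 2 - 2
     = - ((1 - u1 ^+ 2) * (1 - u2 ^+ 2)) by ring.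
  rewrite E in hg; lra.
Qed.



Theorem corollary1 (R : realType) (U Rh : 'M[R]_3) (e a n : 'cV[R]_3) :
  sym_posdef U ->
  dot e e = 1 ->
  rot3 Rh ->
  a != 0 -> n != 0 ->
  Rh *m ((- 1%:M + 2%:R *: tens e e) *m U *m (- 1%:M + 2%:R *: tens e e))
    = U + tens a n ->
  (* CC1: the middle eigenvalue of U equals 1 *)
  (exists u1 u3 : R, ordered_eigs U u1 1 u3) ->
  (* CC2 *)
  (a^T *m U *m cofmx (U *m U - 1%:M) *m n) 0 0 = 0 ->
  (* CC3 *)
  0 <= \tr (U *m U) - \det (U *m U) - dot a a * dot n n / 4%:R - 2%:R ->
  (forall f : R, 0 <= f -> f <= 1 -> f != 2%:R^-1 ->
     forall s1 s2 s3 : R, ordered_eigs (Cf U a n f) s1 s2 s3 ->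
       s2 = 1 /\ s1 < 1 /\ 1 < s3)
  /\
  (forall u1 u2 u3 : R, ordered_eigs U u1 u2 u3 -> u1 < 1 /\ 1 < u3).
Proof.
move=> Hpd He [HRt HRd] Ha Hn Htw [v1 [v3 HCC1]] HCC2 HCC3.
have HU : U^T = U by case: Hpd.
set Q := (- 1%:M + 2%:R *: tens e e) in Htw.
have QQ : Q *m Q = 1%:M by rewrite /Q QQgen He subrr mulr0 scale0r addr0.
have Qs : Q^T = Q by rewrite /Q Qsym.
have hdetQ : \det Q * \det Q = 1 by rewrite -det_mulmx QQ det1.
have hdetF1 : \det (U + tens a n) = \det U.
  by rewrite -Htw !det_mulmx HRd mul1r mulrAC hdetQ mul1r.
have hC1 : Cf U a n 1 = Q *m (U *m U) *m Q.
  rewrite Cf_tr // scale1r -Htw trmx_mul.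
  rewrite -(mulmxA (Q *m U *m Q)^T) (mulmxA Rh^T Rh) HRt mul1mx !trmx_mul Qs HU.
  by rewrite !mulmxA -(mulmxA (Q *m U) Q Q) QQ mulmx1.
have htr1 : \tr (Cf U a n 1) = \tr (U *m U) by rewrite hC1 mxtrace_mulC mulmxA QQ mul1mx.
have hp1 : \det (Cf U a n 1 - 1%:M) = \det (U *m U - 1%:M).
  have -> : Cf U a n 1 - 1%:M = Q *m (U *m U - 1%:M) *m Q.
    by rewrite hC1 mulmxBr mulmxBl mulmx1 QQ.
  by rewrite !det_mulmx mulrAC hdetQ mul1r.
have hdet1U : \det (1%:M - U) = 0.
  have [t c d] := @eig_facts _ _ _ _ _ HCC1. rewrite char3 t c d; ring.
have hUU1 : \det (U *m U - 1%:M) = 0.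
  by rewrite UU1fac det_mulmx -opprB detN3 hdet1U oppr0 mul0r.
have hpf : forall f, \det (Cf U a n f - 1%:M) = 0.
  move=> f; have := @L1 _ (U *m U - 1%:M) (U *m a) (U *m a) n (dot a a) f.
  rewrite -!CfE // hp1 hUU1.
  have -> : ((U *m a)^T *m cofmx (U *m U - 1%:M) *m n) 0 0
      + (n^T *m cofmx (U *m U - 1%:M) *m (U *m a)) 0 0 = 0.
    have e1 : ((U *m a)^T *m cofmx (U *m U - 1%:M) *m n) 0 0 = 0.
      by rewrite trmx_mul HU.
    have e2 : (n^T *m cofmx (U *m U - 1%:M) *m (U *m a)) 0 0
        = ((U *m a)^T *m cofmx (U *m U - 1%:M) *m n) 0 0.
      transitivity ((n^T *m cofmx (U *m U - 1%:M) *m (U *m a))^T 0 0); first by rewrite [RHS]mxE.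
      by rewrite !trmx_mul trmxK cofT UU1sym // mulmxA.
    by rewrite e2 e1 addr0.
  move=> /= h; lra.
have htrf : forall f, \tr (Cf U a n f) = \tr (U *m U) + dot a a * dot n n * (f ^+ 2 - f).
  move=> f; have := @trCf _ U a n f; have := @trCf _ U a n 1; rewrite htr1.
  set x := (n^T *m U *m a) 0 0; set y := (a^T *m U *m n) 0 0 => h1 ->.
  have hxy : x + y = - (dot a a * dot n n) by move: h1; rewrite expr1n !mul1r; lra.
  by rewrite hxy; ring.
have hdetf : forall f, \det (Cf U a n f) = \det (U *m U).
  by move=> f; rewrite Cf_tr // det_mulmx det_tr detF hdetF1 subrr mulr0 addr0 det_mulmx.
have hAA := @dot_pos _ a Ha; have hNN := @dot_pos _ n Hn.
have hAN : 0 < dot a a * dot n n by apply: mulr_gt0.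
split.
- move=> f _ _ hf s1 s2 s3 hs.
  have [ht hc hd] := @eig_facts _ _ _ _ _ hs.
  have h1 : 1 - \tr (Cf U a n f) + c2 (Cf U a n f) - \det (Cf U a n f) = 0.
    have := hpf f; rewrite -opprB detN3 char3 !expr1n !mulr1 => h; lra.
  apply: (@final3 _ s1 s2 s3 _ _ _ _ _ ht hc hd h1).
  + by case: hs.
  + by case: hs => _ [].
  rewrite htrf hdetf.
  have hq : 0 < (f - 2%:R^-1) ^+ 2.
    rewrite lt_def sqr_ge0 andbT sqrf_eq0 subr_eq0; exact: hf.
  have hq2 : 0 < dot a a * dot n n * (f - 2%:R^-1) ^+ 2 by apply: mulr_gt0.
  have E : dot a a * dot n n * (f ^+ 2 - f) =
      dot a a * dot n n * (f - 2%:R^-1) ^+ 2 - dot a a * dot n n / 4%:R by field.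
  rewrite E; lra.
- move=> u1 u2 u3 hu.
  have [ht hc hd] := @eig_facts _ _ _ _ _ hu.
  have hpos := @eig_pos _ _ _ _ _ Hpd hu.
  case: (hu) => h12 [h23 _].
  apply: (@finalU _ u1 u2 u3) => //.
    transitivity (\det (1%:M - U)); last exact: hdet1U.
    by rewrite char3 ht hc hd; ring.
  rewrite -ht -hc -hd.
  have hp : 0 < dot a a * dot n n / 4%:R by apply: divr_gt0.
  rewrite trsq det_mulmx in HCC3.
  rewrite expr2; lra.
Qed.
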